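(* Let $\mathcal{W}$ be a finite set and $\mathcal{E}$ a closed convex subset of $\mathcal{P}_{\mathcal{W}}$. Let $\mathcal{X}$ and $\mathcal{Y}$ be finite sets with functions $f_{\mathcal{X}}:\mathcal{W}\to\mathcal{X}$ and $f_{\mathcal{Y}}:\mathcal{W}\to\mathcal{Y}$. For $y^N\in\mathcal{Y}^N$ define $$T(y^N):=\{x^N\in\mathcal{X}^N:\ \exists P\in\mathcal{E},\ P_{\mathcal{X}\times\mathcal{Y}}=\tilde P_{x^N,y^N}\}.$$ Then $$|T(y^N)|\le\max_{P\in\mathcal{E}:\ P_{\mathcal{Y}}=\tilde P_{y^N}}2^{N H(X|Y)_{P_{\mathcal{X}\times\mathcal{Y}}}}.$$
   Context: $\mathcal{P}_\Omega$ denotes the set of probability mass functions on a finite set $\Omega$. For $P\in\mathcal{P}_{\mathcal{W}}$, $P_{\mathcal{X}\times\mathcal{Y}}$ and $P_{\mathcal{Y}}$ are the distributions induced by $w\mapsto(f_{\mathcal{X}}(w),f_{\mathcal{Y}}(w))$ and $w\mapsto f_{\mathcal{Y}}(w)$, i.e. $P_\Gamma(g)=\sum_{w:f_\Gamma(w)=g}P(w)$. For sequences, $\tilde P_{y^N}(y)=\frac1N|\{i:y_i=y\}|$ and $\tilde P_{x^N,y^N}(x,y)=\frac1N|\{i:(x_i,y_i)=(x,y)\}|$ are types. $H(X|Y)_{P_{\mathcal{X}\times\mathcal{Y}}}$ is the conditional Shannon entropy (base 2) of $X$ given $Y$ under the joint distribution $P_{\mathcal{X}\times\mathcal{Y}}$.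 *)

(* Defs.v *)
From HB Require Import structures.
From mathcomp Require Import all_boot all_order all_algebra.
From mathcomp Require Import all_classical all_reals all_analysis.
Set Implicit Arguments. Unset Strict Implicit. Unset Printing Implicit Defensive.
Import Order.TTheory GRing.Theory Num.Theory.
Import numFieldNormedType.Exports.
Local Open Scope classical_set_scope.
Local Open Scope ring_scope.

Section Defs.
Variable R : realType.

Definition is_pmf (T : finType) (P : {ffun T -> R}) : Prop :=
  (forall t, 0 <= P t) /\ \sum_t P t = 1.

Definition convex_pmfset (T : finType) (E : {ffun T -> R} -> Prop) : Prop :=
  forall P Q t, E P -> E Q -> 0 <= t -> t <= 1 -> E (t *: P + (1 - t) *: Q).

(* closedness (in the Euclidean topology of R^T, T finite): sequential closedness,
   convergence in R^T being coordinatewise convergence *)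
Definition closed_pmfset (T : finType) (E : {ffun T -> R} -> Prop) : Prop :=
  forall (u : nat -> {ffun T -> R}) (P : {ffun T -> R}),
    (forall n, E (u n)) ->
    (forall t, (fun n => u n t : R) @ \oo --> (P t : R)) -> E P.

Definition pmf_push (W G : finType) (f : W -> G) (P : {ffun W -> R}) : {ffun G -> R} :=
  [ffun g => \sum_(w | f w == g) P w].

Definition emp_type1 (Y : finType) (N : nat) (y : N.-tuple Y) : {ffun Y -> R} :=
  [ffun b => #|[set i : 'I_N | tnth y i == b]|%:R / N%:R].

Definition emp_type2 (X Y : finType) (N : nat) (x : N.-tuple X) (y : N.-tuple Y)
  : {ffun X * Y -> R} :=
  [ffun g => #|[set i : 'I_N | (tnth x i, tnth y i) == g]|%:R / N%:R].

Definition log_2 (r : R) : R := ln r / ln 2.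

Definition cond_entropy (X Y : finType) (Q : {ffun X * Y -> R}) : R :=
  - \sum_(g : X * Y)
      (if Q g == 0 then 0
       else Q g * log_2 (Q g / \sum_(a : X) Q (a, g.2))).

Definition T_set (W X Y : finType) (E : {ffun W -> R} -> Prop)
  (fX : W -> X) (fY : W -> Y) (N : nat) (y : N.-tuple Y) : {set N.-tuple X} :=
  [set x : N.-tuple X | `[< exists P, E P /\
       pmf_push (fun w => (fX w, fY w)) P = emp_type2 x y >]].

End Defs.

(* Main.v *)
Require Import Defs.
From HB Require Import structures.
From mathcomp Require Import all_boot all_order all_algebra.
From mathcomp Require Import all_classical all_reals all_analysis.
From mathcomp Require Import ring lra.
Set Implicit Arguments. Unset Strict Implicit. Unset Printing Implicit Defensive.
Import Order.TTheory GRing.Theory Num.Theory.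
Import numFieldNormedType.Exports.
Local Open Scope ring_scope.

Section Count.
Variables (R : realType) (X Y : finType) (N : nat) (y : N.-tuple Y).

Definition cnt (x : N.-tuple X) (g : X * Y) : nat :=
  #|[set i : 'I_N | (tnth x i, tnth y i) == g]|.

Lemma cnt_sum (x : N.-tuple X) (f : X * Y -> R) :
  \sum_g (cnt x g)%:R * f g = \sum_(i < N) f (tnth x i, tnth y i).
Proof.
rewrite (partition_big (fun i : 'I_N => (tnth x i, tnth y i)) predT) //=.
apply: eq_bigr => g _.
rewrite /cnt -sum1_card natr_sum mulr_suml.
apply: eq_big => [i|i]; first by rewrite inE.
rewrite inE => /eqP ->.
by rewrite mul1r.
Qed.

Lemma tuple_prod (F : 'I_N -> X -> R) :
  \sum_(x : N.-tuple X) \prod_(i < N) F i (tnth x i) = \prod_(i < N) \sum_(a : X) F i a.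
Proof.
rewrite bigA_distr_bigA /=.
rewrite (reindex (fun f : {ffun 'I_N -> X} => [tuple f i | i < N])) /=.
  by apply: eq_bigr => f _; apply: eq_bigr => i _; rewrite tnth_mktuple.
exists (fun x : N.-tuple X => [ffun i => tnth x i]) => [f _|x _].
  by apply/ffunP => i; rewrite ffunE tnth_mktuple.
by apply: eq_from_tnth => i; rewrite tnth_mktuple ffunE.
Qed.


Variable T : {set N.-tuple X}.

Definition Sc (g : X * Y) : R := \sum_(x in T) (cnt x g)%:R.
Definition Vc (g : X * Y) : R := Sc g / \sum_(a : X) Sc (a, g.2).

Lemma Sc_ge0 g : 0 <= Sc g.
Proof. by apply: sumr_ge0 => x _; exact: ler0n. Qed.

Lemma Vc_ge0 g : 0 <= Vc g.
Proof. by apply: divr_ge0; [exact: Sc_ge0 | apply: sumr_ge0 => a _; exact: Sc_ge0]. Qed.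

Lemma Vc_gt0 x i : x \in T -> 0 < Vc (tnth x i, tnth y i).
Proof.
move=> xT.
have S1 : 0 < Sc (tnth x i, tnth y i).
  rewrite /Sc (bigD1 x) //=.
  apply: (@lt_le_trans _ _ (cnt x (tnth x i, tnth y i))%:R).
    rewrite ltr0n /cnt card_gt0; apply/set0Pn; exists i; by rewrite inE.
  by rewrite lerDl; apply: sumr_ge0 => z _; exact: ler0n.
rewrite /Vc; apply: divr_gt0 => //=.
rewrite (bigD1 (tnth x i)) //=.
apply: (lt_le_trans S1).
by rewrite lerDl; apply: sumr_ge0 => a _; exact: Sc_ge0.
Qed.

Lemma sumVc_le1 b : \sum_(a : X) Vc (a, b) <= 1.
Proof.
rewrite /Vc /= -mulr_suml.
have [->|nz] := eqVneq (\sum_(a : X) Sc (a, b)) 0; first by rewrite mul0r ler01.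
by rewrite divff.
Qed.

Lemma gibbs : (0 < #|T|)%N ->
  #|T|%:R * ln (#|T|%:R : R) + \sum_g Sc g * ln (Vc g) <= 0.
Proof.
move=> T0.
set M := #|T|.
have Mpos : (0 : R) < M%:R by rewrite ltr0n.
have Hsum : \sum_g Sc g * ln (Vc g) =
    \sum_(x in T) \sum_(i < N) ln (Vc (tnth x i, tnth y i)).
  rewrite /Sc.
  under eq_bigr do rewrite mulr_suml.
  rewrite exchange_big /=.
  by apply: eq_bigr => x _; rewrite cnt_sum.
pose q x := \prod_(i < N) Vc (tnth x i, tnth y i).
have qpos : forall x, x \in T -> 0 < q x.
  by move=> x xT; apply: prodr_gt0 => i _; exact: Vc_gt0.
have lnq : forall x, x \in T -> \sum_(i < N) ln (Vc (tnth x i, tnth y i)) = ln (q x).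
  move=> x xT; rewrite /q.
  rewrite [in RHS](eq_bigr (fun i => expR (ln (Vc (tnth x i, tnth y i))))); last first.
    by move=> i _; rewrite lnK // posrE; apply: Vc_gt0.
  by rewrite -expR_sum expRK.
have qsum : \sum_(x in T) q x <= 1.
  apply: (le_trans _ (_ : \sum_x q x <= 1)).
    rewrite [X in _ <= X](bigID (fun x => x \in T)) /=.
    rewrite lerDl; apply: sumr_ge0 => x _; apply: prodr_ge0 => i _; exact: Vc_ge0.
  rewrite /q (tuple_prod (fun i a => Vc (a, tnth y i))).
  apply: prodr_ile1 => i _; rewrite sumVc_le1 andbT.
  by apply: sumr_ge0 => a _; exact: Vc_ge0.
rewrite Hsum (eq_bigr _ lnq).
have -> : M%:R * ln (M%:R : R) = \sum_(x in T) ln (M%:R : R).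
  by rewrite sumr_const mulr_natl.
rewrite -big_split /=.
apply: (le_trans (y := \sum_(x in T) (M%:R * q x - 1))).
  apply: ler_sum => x xT.
  rewrite -lnM ?posrE //; last exact: qpos.
  have h := @le_ln1Dx R (M%:R * q x - 1).
  rewrite [1 + _]addrC subrK in h; apply: h.
  rewrite ltrBrDl subrr; apply: mulr_gt0 => //; exact: qpos.
rewrite sumrB -mulr_sumr sumr_const subr_le0.
rewrite -[X in _ <= X]mulr1 -mulr_natr mul1r.
by rewrite ler_wpM2l // ltW.
Qed.

End Count.

Lemma card_cl (I : finType) (p : pred I) :
  #|([set i | p i])%classic| = #|[set i | p i]|.
Proof. apply: eq_card => i. rewrite inE. apply/idP/idP; rewrite in_setE //. Qed.

Section Aux.
Variable R : realType.

Lemma avg_in (A : eqType) (W : finType) (E : {ffun W -> R} -> Prop)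
  (hconv : convex_pmfset E) (F : A -> {ffun W -> R}) (s : seq A) :
  s != [::] -> (forall a, a \in s -> E (F a)) ->
  E ((size s)%:R^-1 *: \sum_(a <- s) F a).
Proof.
elim: s => [//|a s IH] _ hs.
have Ea : E (F a) by apply: hs; rewrite mem_head.
case: s IH hs => [|b s] IH hs.
  by rewrite big_cons big_nil addr0 /= invr1 scale1r.
have Es := IH isT (fun c hc => hs c (@mem_behead _ [:: a, b & s] c hc)).
set n := size (b :: s) in Es.
have n0 : (0 : R) < n%:R by rewrite ltr0n.
have := hconv (F a) (n%:R^-1 *: \sum_(c <- b :: s) F c) ((n.+1)%:R^-1) Ea Es.
have -> : (size [:: a, b & s]) = n.+1 by [].
have h1 : (0 : R) <= (n.+1)%:R^-1 by rewrite invr_ge0 ler0n.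
have h2 : ((n.+1)%:R^-1 : R) <= 1 by rewrite invf_le1 // ?ler1n // ltr0n.
move=> /(_ h1 h2).
congr E; apply/ffunP => w.
rewrite [in RHS]big_cons /= !ffunE /=.
rewrite -![_ *: _]/(_ * _).
generalize ((\sum_(c <- b :: s) F c) w) (F a w) => z1 z2.
have nS : ((n.+1)%:R : R) != 0 by rewrite pnatr_eq0.
rewrite -addn1 natrD in nS *.
have nn : (n%:R : R) != 0 by exact: lt0r_neq0.
by field; apply/andP; split.
Qed.

Lemma push_lin (W G I : finType) (f : W -> G) (c : R) (A : {pred I}) (F : I -> {ffun W -> R}) :
  pmf_push f (c *: \sum_(x in A) F x) = c *: \sum_(x in A) pmf_push f (F x).
Proof.
apply/ffunP => g; rewrite !ffunE sum_ffunE.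
rewrite -[_ *: _ in RHS]/(_ * _) mulr_sumr.
under eq_bigr do rewrite ffunE sum_ffunE -[_ *: _]/(_ * _) mulr_sumr.
rewrite exchange_big /=; apply: eq_bigr => x _.
by rewrite ffunE mulr_sumr.
Qed.

Lemma push_marg (W X Y : finType) (fX : W -> X) (fY : W -> Y) (P : {ffun W -> R}) b :
  pmf_push fY P b = \sum_(a : X) pmf_push (fun w => (fX w, fY w)) P (a, b).
Proof.
rewrite ffunE (partition_big fX predT) //=.
apply: eq_bigr => a _; rewrite ffunE; apply: eq_bigl => w.
by rewrite xpair_eqE andbC.
Qed.

Lemma emp_marg (X Y : finType) N (x : N.-tuple X) (y : N.-tuple Y) b :
  \sum_(a : X) emp_type2 R x y (a, b) = emp_type1 R y b.
Proof.
under eq_bigr do rewrite ffunE.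
rewrite ffunE -mulr_suml; congr (_ * _).
rewrite -natr_sum; congr (_ %:R).
under eq_bigr do rewrite card_cl -sum1_card.
rewrite card_cl -sum1_card (partition_big (fun i : 'I_N => tnth x i) predT) //=.
apply: eq_bigr => a _; apply: eq_bigl => i.
by rewrite !inE xpair_eqE andbC.
Qed.

End Aux.

Theorem lemma1 (R : realType) (W X Y : finType) (E : {ffun W -> R} -> Prop)
  (hpmf : forall P, E P -> is_pmf P) (hconv : convex_pmfset E) (hclosed : closed_pmfset E)
  (fX : W -> X) (fY : W -> Y) (N : nat) (y : N.-tuple Y) :
  #|T_set E fX fY y| = 0%N \/
  exists P, [/\ E P, pmf_push fY P = emp_type1 R y &
    (#|T_set E fX fY y|%:R <= (2 : R) `^ (N%:R * cond_entropy (pmf_push (fun w => (fX w, fY w)) P)))].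
Proof.
set T := T_set E fX fY y.
have [T0|Tn0] := eqVneq #|T| 0%N; [by left | right].
have Tpos : (0 < #|T|)%N by rewrite lt0n.
set M := #|T|.
have Mpos : (0 : R) < M%:R by rewrite ltr0n.
have [Pf hPf] : {Pf : N.-tuple X -> {ffun W -> R} & forall x, x \in T ->
    E (Pf x) /\ pmf_push (fun w => (fX w, fY w)) (Pf x) = emp_type2 R x y}.
  apply: (@boolp.choice _ _ (fun x P => x \in T ->
    E P /\ pmf_push (fun w => (fX w, fY w)) P = emp_type2 R x y)) => x.
  case: (boolP (x \in T)) => xT.
    move: (xT); rewrite /T /T_set inE => /asboolP [P [EP hP]].
    by exists P.
  by exists 0.
set P := M%:R^-1 *: \sum_(x in T) Pf x.
have EP : E P.
  have ne : enum T != [::] by rewrite -size_eq0 -cardE.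
  have hin : forall a, a \in enum T -> E (Pf a).
    by move=> a; rewrite mem_enum => /hPf [].
  by have := avg_in hconv ne hin; rewrite -cardE big_enum.
have hQ : pmf_push (fun w => (fX w, fY w)) P = M%:R^-1 *: \sum_(x in T) emp_type2 R x y.
  rewrite /P push_lin; congr (_ *: _); apply: eq_bigr => x xT.
  by case: (hPf x xT).
exists P; split => //.
  apply/ffunP => b; rewrite (push_marg fX) hQ.
  under eq_bigr do rewrite ffunE sum_ffunE.
  rewrite -mulr_sumr exchange_big /=.
  under eq_bigr do rewrite emp_marg.
  rewrite sumr_const.
  have e : forall (c : R) n, (n%:R : R) != 0 -> (n%:R)^-1 * (c *+ n) = c.
    by move=> c n h; rewrite -(mulr_natl c n) mulrA mulVf // mul1r.
  by apply: e; exact: lt0r_neq0.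
have [N0|Npos] := posnP N.
  rewrite N0 mul0r powRr0 -[1 : R]/(1%:R) ler_nat.
  apply: (leq_trans (max_card (mem T))).
  by rewrite card_tuple N0 expn0.
have Nn0 : (N%:R : R) != 0 by rewrite pnatr_eq0 -lt0n.
have Mn0 : (M%:R : R) != 0 by exact: lt0r_neq0.
have ln2 : ln (2 : R) != 0.
  by apply: lt0r_neq0; apply: ln_gt0; rewrite ltr1n.
have hQg : forall g, pmf_push (fun w => (fX w, fY w)) P g = Sc R y T g / (M%:R * N%:R).
  move=> g; rewrite hQ ffunE sum_ffunE -[_ *: _]/(_ * _).
  under eq_bigr do rewrite ffunE card_cl.
  rewrite /Sc /cnt -mulr_suml.
  by field; apply/andP.
set S0 := \sum_g Sc R y T g * ln (Vc R y T g).
have hH : cond_entropy (pmf_push (fun w => (fX w, fY w)) P) =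
    - ((M%:R * N%:R)^-1 / ln 2 * S0).
  rewrite /cond_entropy; congr (- _); rewrite /S0 mulr_sumr.
  apply: eq_bigr => g _; rewrite !hQg.
  have [Q0|Qn0] := eqVneq (Sc R y T g / (M%:R * N%:R)) 0.
    have -> : Sc R y T g = 0.
      move/eqP: Q0; rewrite mulf_eq0 invr_eq0 mulf_eq0 (negbTE Mn0) (negbTE Nn0) !orbF.
      by move/eqP.
    by rewrite mul0r mulr0.
  have Sn0 : Sc R y T g != 0.
    by apply: contraNneq Qn0 => ->; rewrite mul0r.
  have Sdn0 : \sum_(a : X) Sc R y T (a, g.2) != 0.
    apply: lt0r_neq0.
    have Sp : 0 < Sc R y T g by rewrite lt0r Sn0 Sc_ge0.
    rewrite (bigD1 g.1) //= -surjective_pairing.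
    apply: (lt_le_trans Sp).
    by rewrite lerDl; apply: sumr_ge0 => a _; exact: Sc_ge0.
  under eq_bigr do rewrite hQg.
  rewrite -mulr_suml /log_2 /Vc.
  have -> : Sc R y T g / (M%:R * N%:R) / ((\sum_(i : X) Sc R y T (i, g.2)) / (M%:R * N%:R))
      = Sc R y T g / \sum_(a : X) Sc R y T (a, g.2).
    by field; rewrite Sdn0 Mn0 Nn0.
  by field; rewrite ln2 Mn0 Nn0.
have two : (2 : R) != 0 by rewrite pnatr_eq0.
rewrite /powR (negbTE two) hH.
have -> : N%:R * - ((M%:R * N%:R)^-1 / ln 2 * S0) * ln 2 = - (M%:R^-1 * S0).
  by field; rewrite ln2 Mn0 Nn0.
have G := gibbs R y Tpos.
rewrite -/M -/S0 in G.
rewrite -[X in X <= _](@lnK R M%:R) ?posrE // ler_expR.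
rewrite -(ler_pM2l Mpos) mulrN mulrA mulfV // mul1r.
lra.
Qed.
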